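(* No rational prime $p\in\mathbb{Z}$ is a prime of $H_{1,2,2}$.
   Context: Let $\mathbf{i},\mathbf{j},\mathbf{k}$ be the standard quaternion units. $H_{1,2,2}$ is the subring of the quaternions equal to the $\mathbb{Z}$-module generated by $\mathbf{v}_1=1$, $\mathbf{v}_2=\mathbf{i}$, $\mathbf{v}_3=\tfrac12(1+\mathbf{i}+\sqrt2\,\mathbf{j})$, $\mathbf{v}_4=\tfrac12(1+\mathbf{i}+\sqrt2\,\mathbf{k})$. A unit is an element invertible in $H_{1,2,2}$. A prime of $H_{1,2,2}$ is a nonzero nonunit $\boldsymbol\pi$ such that whenever $\boldsymbol\pi=\mathbf{a}\mathbf{b}$ with $\mathbf{a},\mathbf{b}\in H_{1,2,2}$, at least one of $\mathbf{a},\mathbf{b}$ is a unit. *)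

(* Defs.v *)
From Stdlib Require Import Reals ZArith Znumtheory.
Open Scope R_scope.

Record quat : Type := Quat { qre : R; qi : R; qj : R; qk : R }.

Definition qmul (x y : quat) : quat :=
  Quat (qre x * qre y - qi x * qi y - qj x * qj y - qk x * qk y)
       (qre x * qi y + qi x * qre y + qj x * qk y - qk x * qj y)
       (qre x * qj y - qi x * qk y + qj x * qre y + qk x * qi y)
       (qre x * qk y + qi x * qj y - qj x * qi y + qk x * qre y).

Definition qadd (x y : quat) : quat :=
  Quat (qre x + qre y) (qi x + qi y) (qj x + qj y) (qk x + qk y).

Definition qscale (r : R) (x : quat) : quat :=
  Quat (r * qre x) (r * qi x) (r * qj x) (r * qk x).

Definition q0 : quat := Quat 0 0 0 0.
Definition q1 : quat := Quat 1 0 0 0.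
Definition qI : quat := Quat 0 1 0 0.
Definition qJ : quat := Quat 0 0 1 0.
Definition qK : quat := Quat 0 0 0 1.

Definition v1 : quat := q1.
Definition v2 : quat := qI.
Definition v3 : quat := qscale (/2) (qadd (qadd q1 qI) (qscale (sqrt 2) qJ)).
Definition v4 : quat := qscale (/2) (qadd (qadd q1 qI) (qscale (sqrt 2) qK)).

(* Membership in H_{1,2,2}: the Z-module generated by v1, v2, v3, v4. *)
Definition inH (q : quat) : Prop :=
  exists n1 n2 n3 n4 : Z,
    q = qadd (qadd (qscale (IZR n1) v1) (qscale (IZR n2) v2))
             (qadd (qscale (IZR n3) v3) (qscale (IZR n4) v4)).

Definition unitH (u : quat) : Prop :=
  inH u /\ exists w, inH w /\ qmul u w = q1 /\ qmul w u = q1.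

Definition primeH (p : quat) : Prop :=
  inH p /\ p <> q0 /\ ~ unitH p /\
  forall a b, inH a -> inH b -> p = qmul a b -> unitH a \/ unitH b.

Definition qofZ (n : Z) : quat := Quat (IZR n) 0 0 0.

(* Main.v *)
Require Import Defs.
From Stdlib Require Import Reals ZArith Znumtheory List Lia Lra Classical FinFun.

Section NT.
Local Open Scope Z_scope.

Lemma NoDup_map_in {A B} (f : A -> B) (l : list A) :
  NoDup l -> (forall x y, In x l -> In y l -> f x = f y -> x = y) -> NoDup (map f l).
Proof.
  induction 1 as [|a l Ha Hl IH]; intros Hinj; simpl; constructor.
  - intros Hin. apply in_map_iff in Hin. destruct Hin as [x [Hx Hxl]].
    assert (x = a) by (apply Hinj; simpl; auto). subst. contradiction.
  - apply IH. intros x y Hx Hy. apply Hinj; simpl; auto.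
Qed.

Lemma mod_eq_div (p a b : Z) : 0 < p -> a mod p = b mod p -> (p | a - b).
Proof.
  intros Hp H. exists (a / p - b / p).
  pose proof (Z.div_mod a p). pose proof (Z.div_mod b p). lia.
Qed.

Lemma small_div (p d : Z) : 0 < p -> (p | d) -> -p < d < p -> d = 0.
Proof. intros Hp [k Hk] Hb. subst. destruct (Z.lt_trichotomy k 0) as [H|[H|H]]; [nia|subst; ring|nia]. Qed.

Definition zr (n : nat) := map Z.of_nat (seq 0 (S n)).

Lemma zr_in n x : In x (zr n) -> 0 <= x <= Z.of_nat n.
Proof. unfold zr. intros H. apply in_map_iff in H. destruct H as [k [<- Hk]].
  apply in_seq in Hk. lia. Qed.

Lemma two_sq (p : Z) (n : nat) : prime p -> p = 2 * Z.of_nat n + 1 ->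
  exists x y, 0 <= x <= Z.of_nat n /\ 0 <= y <= Z.of_nat n /\ (p | x*x + y*y + 1).
Proof.
  intros Hpr Hpn. apply NNPP. intros Hno.
  assert (Hp : 0 < p) by lia.
  set (L1 := map (fun x => (x*x) mod p) (zr n)).
  set (L2 := map (fun y => (-1 - y*y) mod p) (zr n)).
  assert (HND : NoDup (L1 ++ L2)).
  { apply NoDup_app.
    - apply NoDup_map_in. { apply FinFun.Injective_map_NoDup. intros a b; lia. apply seq_NoDup. }
      intros x y Hx Hy Heq. apply zr_in in Hx. apply zr_in in Hy.
      apply mod_eq_div in Heq; [|lia].
      assert (Hm : (p | (x - y) * (x + y))) by (replace ((x-y)*(x+y)) with (x*x - y*y) by ring; auto).
      apply prime_mult in Hm; auto. destruct Hm as [Hm|Hm]; apply small_div in Hm; lia.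
    - apply NoDup_map_in. { apply FinFun.Injective_map_NoDup. intros a b; lia. apply seq_NoDup. }
      intros x y Hx Hy Heq. apply zr_in in Hx. apply zr_in in Hy.
      apply mod_eq_div in Heq; [|lia].
      assert (Hm : (p | (y - x) * (y + x))) by (replace ((y-x)*(y+x)) with (-1 - x*x - (-1 - y*y)) by ring; auto).
      apply prime_mult in Hm; auto. destruct Hm as [Hm|Hm]; apply small_div in Hm; lia.
    - intros a Ha Hb. unfold L1, L2 in *. apply in_map_iff in Ha. apply in_map_iff in Hb.
      destruct Ha as [x [Hx Hxi]]. destruct Hb as [y [Hy Hyi]].
      apply zr_in in Hxi. apply zr_in in Hyi. apply Hno. exists x, y. split; [lia|]. split; [lia|].
      rewrite <- Hy in Hx. apply mod_eq_div in Hx; [|lia].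
      replace (x*x+y*y+1) with (x * x - (-1 - y * y)) by ring. auto. }
  apply NoDup_incl_length with (l' := map Z.of_nat (seq 0 (Z.to_nat p))) in HND.
  - rewrite length_app in HND. unfold L1, L2, zr in HND. rewrite !length_map, length_seq in HND. rewrite length_seq in HND. lia.
  - intros a Ha. apply in_app_or in Ha. apply in_map_iff. exists (Z.to_nat a).
    assert (0 <= a < p).
    { destruct Ha as [Ha|Ha]; apply in_map_iff in Ha; destruct Ha as [x [<- _]]; apply Z.mod_pos_bound; lia. }
    split; [lia|]. apply in_seq. lia.
Qed.

Definition S4 (k : Z) := exists a b c d, a*a + b*b + c*c + d*d = k.

Lemma red (x m : Z) : 0 < m -> exists y t, x = y + m * t /\ -m < 2*y <= m.
Proof.
  intros Hm. set (h := (m-1)/2).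
  assert (2*h <= m-1 /\ m - 2 <= 2*h) by (unfold h; pose proof (Z.div_mod (m-1) 2); pose proof (Z.mod_pos_bound (m-1) 2); lia).
  exists ((x + h) mod m - h), ((x+h)/m).
  pose proof (Z.div_mod (x+h) m). pose proof (Z.mod_pos_bound (x+h) m). lia.
Qed.

Lemma sq0 (y : Z) : y*y = 0 -> y = 0.
Proof. intros H. destruct (Z.eq_mul_0 y y) as [H1 _]. destruct (H1 H); auto. Qed.

Lemma half (y m : Z) : -m < 2*y <= m -> (2*y)*(2*y) = m*m -> 2*y = m.
Proof. intros B H. assert (E : (2*y - m)*(2*y+m) = 0) by lia.
  apply Z.eq_mul_0 in E. lia. Qed.

Lemma cancel (m p k : Z) : 0 < m -> m * p = m * (k * m) -> p = k * m.
Proof. intros Hm H. apply Z.mul_reg_l with m; lia. Qed.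

Lemma step (p m : Z) : prime p -> 1 < m < p -> S4 (m * p) -> exists r, 0 < r < m /\ S4 (r * p).
Proof.
  intros Hpr Hm [x1 [x2 [x3 [x4 Hx]]]].
  destruct (red x1 m) as [y1 [t1 [E1 B1]]]; [lia|].
  destruct (red x2 m) as [y2 [t2 [E2 B2]]]; [lia|].
  destruct (red x3 m) as [y3 [t3 [E3 B3]]]; [lia|].
  destruct (red x4 m) as [y4 [t4 [E4 B4]]]; [lia|].
  set (r := p - 2*(x1*t1+x2*t2+x3*t3+x4*t4) + m*(t1*t1+t2*t2+t3*t3+t4*t4)).
  assert (HS : y1*y1+y2*y2+y3*y3+y4*y4 = m * r).
  { unfold r. rewrite Z.mul_add_distr_l, Z.mul_sub_distr_l, <- Hx. subst x1 x2 x3 x4. ring. }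
  assert (Q1 : (2*y1)*(2*y1) <= m*m) by (assert (0 <= (m - 2*y1)*(m+2*y1)) by (apply Z.mul_nonneg_nonneg; lia); lia).
  assert (Q2 : (2*y2)*(2*y2) <= m*m) by (assert (0 <= (m - 2*y2)*(m+2*y2)) by (apply Z.mul_nonneg_nonneg; lia); lia).
  assert (Q3 : (2*y3)*(2*y3) <= m*m) by (assert (0 <= (m - 2*y3)*(m+2*y3)) by (apply Z.mul_nonneg_nonneg; lia); lia).
  assert (Q4 : (2*y4)*(2*y4) <= m*m) by (assert (0 <= (m - 2*y4)*(m+2*y4)) by (apply Z.mul_nonneg_nonneg; lia); lia).
  assert (Hr0 : 0 <= r).
  { destruct (Z_lt_le_dec r 0) as [Hn|Hn]; [|lia]. exfalso.
    assert (m * r < 0) by (apply Z.mul_pos_neg; lia).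
    assert (0 <= y1*y1) by apply Z.square_nonneg. assert (0 <= y2*y2) by apply Z.square_nonneg.
    assert (0 <= y3*y3) by apply Z.square_nonneg. assert (0 <= y4*y4) by apply Z.square_nonneg. lia. }
  assert (Hrm : r <= m).
  { destruct (Z_le_gt_dec r m) as [Hn|Hn]; [lia|]. exfalso.
    assert (m * m < m * r) by (apply Z.mul_lt_mono_pos_l; lia). lia. }
  assert (Hdm : ~ (m | p)).
  { intros Hd. apply prime_divisors in Hd; auto. lia. }
  destruct (Z.eq_dec r 0) as [R0|R0].
  { exfalso. rewrite R0 in HS.
    assert (0 <= y1*y1) by apply Z.square_nonneg. assert (0 <= y2*y2) by apply Z.square_nonneg.
    assert (0 <= y3*y3) by apply Z.square_nonneg. assert (0 <= y4*y4) by apply Z.square_nonneg.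
    assert (y1 = 0) by (apply sq0; lia). assert (y2 = 0) by (apply sq0; lia).
    assert (y3 = 0) by (apply sq0; lia). assert (y4 = 0) by (apply sq0; lia).
    subst. apply Hdm. exists (t1*t1+t2*t2+t3*t3+t4*t4).
    apply cancel; [lia|]. rewrite <- Hx. ring. }
  destruct (Z.eq_dec r m) as [Rm|Rm].
  { exfalso. rewrite Rm in HS.
    assert (F1 : (2*y1)*(2*y1) = m*m) by lia.
    assert (F2 : (2*y2)*(2*y2) = m*m) by lia.
    assert (F3 : (2*y3)*(2*y3) = m*m) by lia.
    assert (F4 : (2*y4)*(2*y4) = m*m) by lia.
    pose proof (half _ _ B1 F1) as G1. pose proof (half _ _ B2 F2) as G2.
    pose proof (half _ _ B3 F3) as G3. pose proof (half _ _ B4 F4) as G4.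
    apply Hdm. exists (1 + t1 + t1*t1 + t2 + t2*t2 + t3 + t3*t3 + t4 + t4*t4).
    apply cancel; [lia|].
    { rewrite <- Hx. subst x1 x2 x3 x4. rewrite <- G1. replace y2 with y1 by lia.
      replace y3 with y1 by lia. replace y4 with y1 by lia. ring. } }
  exists r. split; [lia|].
  set (w1 := p - (x1*t1+x2*t2+x3*t3+x4*t4)).
  set (w2 := -(x1*t2 - x2*t1 + x3*t4 - x4*t3)).
  set (w3 := -(x1*t3 - x2*t4 - x3*t1 + x4*t2)).
  set (w4 := -(x1*t4 + x2*t3 - x3*t2 - x4*t1)).
  exists w1, w2, w3, w4.
  assert (m*m*(w1*w1+w2*w2+w3*w3+w4*w4) = m*m*(r*p)).
  { assert (Z1 : m*w1 = x1*y1+x2*y2+x3*y3+x4*y4).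
    { unfold w1. rewrite Z.mul_sub_distr_l, <- Hx. subst x1 x2 x3 x4. ring. }
    assert (Z2 : m*w2 = x1*y2 - x2*y1 + x3*y4 - x4*y3) by (unfold w2; subst x1 x2 x3 x4; ring).
    assert (Z3 : m*w3 = x1*y3 - x2*y4 - x3*y1 + x4*y2) by (unfold w3; subst x1 x2 x3 x4; ring).
    assert (Z4 : m*w4 = x1*y4 + x2*y3 - x3*y2 - x4*y1) by (unfold w4; subst x1 x2 x3 x4; ring).
    transitivity ((x1*x1+x2*x2+x3*x3+x4*x4)*(y1*y1+y2*y2+y3*y3+y4*y4)).
    - transitivity ((m*w1)*(m*w1)+(m*w2)*(m*w2)+(m*w3)*(m*w3)+(m*w4)*(m*w4)); [ring|].
      rewrite Z1, Z2, Z3, Z4. ring.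
    - rewrite Hx, HS. ring. }
  apply Z.mul_reg_l with (m*m); [assert (0 < m*m) by (apply Z.mul_pos_pos; lia); lia|]. auto.
Qed.

Lemma descent (p : Z) : prime p -> forall k : nat, forall m, 0 < m -> (Z.to_nat m <= k)%nat -> m < p -> S4 (m*p) -> S4 p.
Proof.
  intros Hpr k. induction k as [|k IH]; intros m H0 Hk Hmp HS.
  - lia.
  - destruct (Z.eq_dec m 1) as [->|Hm1].
    + now rewrite Z.mul_1_l in HS.
    + destruct (step p m Hpr ltac:(lia) HS) as [r [Hr HSr]].
      apply (IH r); auto; lia.
Qed.

Lemma lagrange (p : Z) : prime p -> S4 p.
Proof.
  intros Hpr. pose proof (prime_ge_2 p Hpr).
  destruct (Z.eq_dec p 2) as [->|Hp2].
  { exists 1, 1, 0, 0. reflexivity. }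
  assert (Hodd : exists n : nat, p = 2 * Z.of_nat n + 1).
  { destruct (Zeven_odd_dec p) as [He|Ho].
    - exfalso. apply Zeven_ex in He. destruct He as [q Hq].
      assert (Hd : (2 | p)) by (exists q; lia). apply prime_divisors in Hd; auto. lia.
    - apply Zodd_ex in Ho. destruct Ho as [q Hq]. exists (Z.to_nat q). lia. }
  destruct Hodd as [n Hn].
  destruct (two_sq p n Hpr Hn) as [x [y [Hx [Hy [m Hm]]]]].
  assert (Hx2 : x*x <= Z.of_nat n * Z.of_nat n) by (apply Z.mul_le_mono_nonneg; lia).
  assert (Hy2 : y*y <= Z.of_nat n * Z.of_nat n) by (apply Z.mul_le_mono_nonneg; lia).
  assert (Hx0 : 0 <= x*x) by apply Z.square_nonneg. assert (Hy0 : 0 <= y*y) by apply Z.square_nonneg.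
  assert (Hm0 : 0 < m).
  { destruct (Z_lt_le_dec 0 m) as [h|h]; auto. assert (m * p <= 0) by (apply Z.mul_nonpos_nonneg; lia). lia. }
  assert (Hmp : m < p).
  { destruct (Z_lt_le_dec m p) as [h|h]; auto. assert (p * p <= m * p) by (apply Z.mul_le_mono_nonneg_r; lia).
    subst p. lia. }
  apply (descent p Hpr (Z.to_nat m) m); try lia.
  exists x, y, 1, 0. lia.
Qed.
End NT.
Local Open Scope R_scope.


Definition elt (n1 n2 n3 n4 : Z) : quat :=
  qadd (qadd (qscale (IZR n1) v1) (qscale (IZR n2) v2))
       (qadd (qscale (IZR n3) v3) (qscale (IZR n4) v4)).

Lemma quat_eq (x y : quat) : qre x = qre y -> qi x = qi y -> qj x = qj y -> qk x = qk y -> x = y.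
Proof. destruct x, y; simpl; intros; subst; reflexivity. Qed.

Lemma elt_re n1 n2 n3 n4 : qre (elt n1 n2 n3 n4) = IZR n1 + (IZR n3 + IZR n4) / 2.
Proof. unfold elt, v1, v2, v3, v4, q1, qI, qJ, qK, qadd, qscale; simpl. field. Qed.
Lemma elt_i n1 n2 n3 n4 : qi (elt n1 n2 n3 n4) = IZR n2 + (IZR n3 + IZR n4) / 2.
Proof. unfold elt, v1, v2, v3, v4, q1, qI, qJ, qK, qadd, qscale; simpl. field. Qed.
Lemma elt_j n1 n2 n3 n4 : qj (elt n1 n2 n3 n4) = IZR n3 * sqrt 2 / 2.
Proof. unfold elt, v1, v2, v3, v4, q1, qI, qJ, qK, qadd, qscale; simpl. field. Qed.
Lemma elt_k n1 n2 n3 n4 : qk (elt n1 n2 n3 n4) = IZR n4 * sqrt 2 / 2.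
Proof. unfold elt, v1, v2, v3, v4, q1, qI, qJ, qK, qadd, qscale; simpl. field. Qed.

Definition qn (x : quat) := qre x * qre x + qi x * qi x + qj x * qj x + qk x * qk x.

Lemma qn_mul x y : qn (qmul x y) = qn x * qn y.
Proof. destruct x, y; unfold qn, qmul; simpl; ring. Qed.

Lemma s2 : sqrt 2 * sqrt 2 = 2.
Proof. apply sqrt_sqrt; lra. Qed.

Lemma qn_elt n1 n2 n3 n4 : qn (elt n1 n2 n3 n4) =
  IZR (n1*n1 + n2*n2 + (n1+n2)*(n3+n4) + n3*n3 + n4*n4 + n3*n4).
Proof.
  unfold qn. rewrite elt_re, elt_i, elt_j, elt_k. rewrite ?mult_IZR, ?plus_IZR, ?mult_IZR.
  replace (IZR n3 * sqrt 2 / 2 * (IZR n3 * sqrt 2 / 2)) with (IZR n3 * IZR n3 * (sqrt 2 * sqrt 2) / 4) by field.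
  replace (IZR n4 * sqrt 2 / 2 * (IZR n4 * sqrt 2 / 2)) with (IZR n4 * IZR n4 * (sqrt 2 * sqrt 2) / 4) by field.
  rewrite s2. rewrite !plus_IZR. field.
Qed.

Lemma inH_elt q : inH q -> exists n1 n2 n3 n4, q = elt n1 n2 n3 n4.
Proof. intros [n1 [n2 [n3 [n4 H]]]]. exists n1, n2, n3, n4. exact H. Qed.

Lemma not_unit q (P : Z) : inH q -> qn q = IZR P -> (1 < P)%Z -> ~ unitH q.
Proof.
  intros Hq HN HP [_ [w [Hw [Hqw _]]]].
  destruct (inH_elt w Hw) as [m1 [m2 [m3 [m4 ->]]]].
  assert (H := qn_mul q (elt m1 m2 m3 m4)). rewrite Hqw, HN, qn_elt in H.
  unfold qn, q1 in H; simpl in H.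
  assert (H1 : (1 = P * (m1*m1 + m2*m2 + (m1+m2)*(m3+m4) + m3*m3 + m4*m4 + m3*m4))%Z).
  { apply eq_IZR. rewrite mult_IZR, <- H. ring. }
  set (k := (m1*m1 + m2*m2 + (m1+m2)*(m3+m4) + m3*m3 + m4*m4 + m3*m4)%Z) in H1.
  destruct (Z_lt_le_dec k 1) as [Hk|Hk].
  - assert (P * k <= 0)%Z by (apply Z.mul_nonneg_nonpos; lia). lia.
  - assert (P * 1 <= P * k)%Z by (apply Z.mul_le_mono_nonneg_l; lia). lia.
Qed.

Lemma main_fact (p a b c d : Z) : (a*a+b*b+c*c+d*d = p)%Z ->
  qofZ p = qmul (elt (a-c) (b-c) (c+d) (c-d)) (elt (a+c) (c-b) (-(c+d)) (-(c-d))).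
Proof.
  intros Hp. subst p.
  apply quat_eq; unfold qofZ, qmul; cbn [qre qi qj qk];
  rewrite ?elt_re, ?elt_i, ?elt_j, ?elt_k; repeat rewrite ?plus_IZR, ?minus_IZR, ?opp_IZR, ?mult_IZR.
  - replace (sqrt 2) with (sqrt 2) by reflexivity.
    transitivity (IZR a * IZR a + IZR b * IZR b + (IZR c + IZR d)*(IZR c + IZR d) * (sqrt 2 * sqrt 2) / 4
       + (IZR c - IZR d)*(IZR c - IZR d) * (sqrt 2 * sqrt 2) / 4).
    + rewrite s2. field.
    + field.
  - field.
  - field.
  - field.
Qed.

Theorem theorem36 : forall p : Z, prime p -> ~ primeH (qofZ p).
Proof.
  intros p Hp [_ [_ [_ Hfac]]].
  pose proof (prime_ge_2 p Hp) as H2.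
  destruct (lagrange p Hp) as [a [b [c [d H]]]].
  assert (I1 : inH (elt (a-c) (b-c) (c+d) (c-d))) by (do 4 eexists; reflexivity).
  assert (I2 : inH (elt (a+c) (c-b) (-(c+d)) (-(c-d)))) by (do 4 eexists; reflexivity).
  destruct (Hfac _ _ I1 I2 (main_fact p a b c d H)) as [U|U].
  - apply (not_unit _ p I1); [|lia|exact U].
    rewrite qn_elt. f_equal. rewrite <- H. ring.
  - apply (not_unit _ p I2); [|lia|exact U].
    rewrite qn_elt. f_equal. rewrite <- H. ring.
Qed.
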